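(* The tuple $(p,\sqrt{1-p^2})$ is not simulable.
   Context: Let $p\in[0,1]$ be an unknown parameter and let $|p\rangle=\sqrt{p}|0\rangle+\sqrt{1-p}|1\rangle$. For a complex function $h(p)$ write $|f_h\rangle=\frac{1}{\sqrt{1+|h(p)|^2}}(h(p)|0\rangle+|1\rangle)$. A tuple $(k_0(p),k_1(p))$ of complex functions with $|k_0|^2+|k_1|^2=1$ is called simulable if, starting from an unbounded supply of copies of $|p\rangle$, one can produce the single-qubit state $|f_{k_0/k_1}\rangle=k_0(p)|0\rangle+k_1(p)|1\rangle$ (up to a global phase) in finitely many steps with nonzero success probability, where each step applies a unitary transformation or a measurement (in the computational basis) to the current state together with auxiliary qubits; the operations may not depend on $p$. Auxiliary qubits may be other simulable states or constant states $|a_c\rangle=\frac{1}{\sqrt{|a|^2+1}}(a|0\rangle+|1\rangle)$ with $a\in\mathbb{C}$ a constant independent of $p$. *)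

(* Defs.v *)
From HB Require Import structures.
From mathcomp Require Import all_boot all_order all_algebra.
From mathcomp Require Import complex.
From mathcomp Require Import reals.
Set Implicit Arguments. Unset Strict Implicit. Unset Printing Implicit Defensive.
Import Order.TTheory GRing.Theory Num.Theory.
Local Open Scope ring_scope.

(* Quantum simulability of single-qubit states depending on a parameter
   p in [0,1] (quantum-to-quantum Bernoulli factory).
   Complex numbers are R[i] for a real field R (realType). *)

Section Simulable.
Variable R : realType.
Local Notation C := (R[i]).

(* A p-dependent single-qubit state: p |-> (amplitude of |0>, amplitude of |1>). *)
Definition qstate := R -> C * C.

Definition pstate : qstate :=
  fun p => ((Num.sqrt p)%:C%C, (Num.sqrt (1 - p))%:C%C).

Definition cstate (a : C) : qstate :=
  fun _ => let s := (Num.sqrt (complex.Re a ^+ 2 + complex.Im a ^+ 2 + 1))%:C%C in (a / s, 1 / s).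

Definition amp (v : C * C) (b : bool) : C := if b then v.2 else v.1.

(* product state of the n qubits inp 0, ..., inp (n-1), qubit i being bit i
   of the computational-basis index *)
Definition prod_state (n : nat) (inp : 'I_n -> qstate) (p : R) : 'cV[C]_(2 ^ n) :=
  \col_(j < 2 ^ n) \prod_(i < n) amp (inp i p) (odd (j %/ 2 ^ i)).

(* amplitude of a column vector at a natural-number index (0 if out of range) *)
Definition at_index (N : nat) (v : 'cV[C]_N) (k : nat) : C :=
  \sum_(j < N | val j == k) v j 0.

(* One run (branch) of a protocol on n.+1 qubits: prepare the product of the
   inputs, apply the p-independent unitary U, measure qubits 1..n in the
   computational basis and post-select outcome string m (bit l-1 of m is the
   outcome of qubit l); the (unnormalised) post-measurement state of qubit 0
   is returned.  Its squared norm is the probability of this branch. *)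
Definition branch_out (n : nat) (inp : 'I_n.+1 -> qstate) (U : 'M[C]_(2 ^ n.+1))
  (m : nat) (p : R) : C * C :=
  let v := U *m prod_state inp p in
  (at_index v (2 * m)%N, at_index v (2 * m).+1).

(* A state k (normalised on [0,1]) is
   simulable if there is a finite family of branches (a finite protocol;
   a protocol may try several independent attempts in sequence) such that
   for every p in [0,1], each branch outputs, up to normalisation and a
   global phase, the state k p (or has probability 0), and some branch has
   nonzero probability. *)
Inductive simulable : qstate -> Prop :=
| Simulable (k : qstate) (nb : nat) (ns : 'I_nb -> nat)
    (inp : forall b : 'I_nb, 'I_(ns b).+1 -> qstate)
    (U : forall b : 'I_nb, 'M[C]_(2 ^ (ns b).+1))
    (m : 'I_nb -> nat) :
    (forall p : R, 0 <= p <= 1 ->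
       `|(k p).1| ^+ 2 + `|(k p).2| ^+ 2 = 1) ->
    (forall (b : 'I_nb) (i : 'I_(ns b).+1),
       inp b i = pstate \/ (exists a : C, inp b i = cstate a) \/ simulable (inp b i)) ->
    (forall b : 'I_nb, U b \is unitarymx) ->
    (forall p : R, 0 <= p <= 1 ->
       (forall b : 'I_nb, exists c : C,
          branch_out (inp b) (U b) (m b) p = (c * (k p).1, c * (k p).2))
       /\ (exists b : 'I_nb, branch_out (inp b) (U b) (m b) p != (0, 0))) ->
    simulable k.

Definition simulable_tuple (k0 k1 : R -> C) : Prop :=
  simulable (fun p => (k0 p, k1 p)).

End Simulable.

(* Main.v *)
Require Import Defs.
From HB Require Import structures.
From mathcomp Require Import all_boot all_order all_algebra.
From mathcomp Require Import complex.
From mathcomp Require Import reals.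
From mathcomp Require Import ring lra.
From Stdlib Require Import ClassicalEpsilon FunctionalExtensionality.
Import Order.TTheory GRing.Theory Num.Theory.
Local Open Scope ring_scope.

Section Alg.
Variable R : realType.
Local Notation C := (R[i]).

Definition Dp : {poly C} := (1 + 'X^2) ^+ 4 - 16%:R * 'X^2 ^+ 2.

Let a : R := Num.sqrt 2.
Let w : R := - 3%:R - 2%:R * a.
Let r : C := 'i%C * (1 + a)%:C%C.

Lemma a2 : a ^+ 2 = 2%:R.
Proof. by rewrite /a sqr_sqrtr // ler0n. Qed.

Lemma r2 : r ^+ 2 = w%:C%C.
Proof.
rewrite /r exprMn sqr_i -rmorphXn /= /w.
have -> : (1 + a) ^+ 2 = 3%:R + 2%:R * a.
  have e : (1 + a) ^+ 2 = 1 + 2%:R * a + a ^+ 2 by ring.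
  by rewrite e a2; ring.
by rewrite mulN1r -rmorphN /= opprD.
Qed.

Lemma r_neq0 : r != 0.
Proof.
rewrite /r mulf_neq0 //.
  by rewrite complexiE neq0Ci.
rewrite (inj_eq (@complexI R)) gt_eqF // ltr_wpDr ?sqrtr_ge0 //.
Qed.

Let z : {poly C} := r%:P.

Lemma Dp_eval x : Dp.[x] = (1 + x^+2)^+4 - 16%:R * (x^+2)^+2.
Proof.
rewrite /Dp !(hornerD, hornerN, hornerM, horner_exp, hornerXn) -polyC1 !hornerC !hornerX; ring.
Qed.

Definition D1g (z : {poly C}) : {poly C} := ('X + z) *
  ((1 + 'X^2) ^+ 3 + (1 + 'X^2) ^+ 2 * (1 + z ^+ 2) + (1 + 'X^2) * (1 + z ^+ 2) ^+ 2
   + (1 + z ^+ 2) ^+ 3 - 16%:R * ('X^2 + z ^+ 2)).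
Definition D1 := D1g z.

Lemma D_fact_gen x : Dp - (Dp.[x])%:P = ('X - x%:P) * D1g x%:P.
Proof.
rewrite Dp_eval /Dp /D1g.
rewrite !(rmorphB, rmorphM, rmorphXn, rmorphD, rmorph1, rmorph_nat).
ring.
Qed.

Lemma D1_eval x : D1.[x] = (x + r) *
  ((1 + x^+2) ^+ 3 + (1 + x^+2) ^+ 2 * (1 + r ^+ 2) + (1 + x^+2) * (1 + r ^+ 2) ^+ 2
   + (1 + r ^+ 2) ^+ 3 - 16%:R * (x^+2 + r ^+ 2)).
Proof.
rewrite /D1 /D1g /z !(hornerD, hornerN, hornerM, horner_exp, hornerXn) -polyC1 !hornerC !hornerX; ring.
Qed.

Lemma Dr : Dp.[r] = 0.
Proof.
rewrite Dp_eval r2.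
have e : (1 + w) ^+ 4 - 16%:R * w ^+ 2 = 0.
  have e : (1 + w) ^+ 4 - 16%:R * w ^+ 2 = ((1+w)^+2 - 4%:R * w) * 4%:R * (a ^+ 2 - 2%:R).
    by rewrite /w; ring.
  by rewrite e a2 subrr mulr0.
have := congr1 (real_complex R) e.
by rewrite !(rmorphB, rmorphD, rmorphM, rmorphXn, rmorph1, rmorph_nat, rmorph0).
Qed.

Lemma D_factor : Dp = ('X - z) * D1.
Proof.
have h : Dp = Dp - (Dp.[r])%:P by rewrite Dr subr0.
by rewrite h D_fact_gen.
Qed.

Lemma D1r : D1.[r] != 0.
Proof.
rewrite D1_eval r2 mulf_neq0 //.
  rewrite -mulr2n mulrn_eq0 /= r_neq0 //.
have e : (1 + w) ^+ 3 + (1 + w) ^+ 2 * (1 + w) + (1 + w) * (1 + w) ^+ 2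
   + (1 + w) ^+ 3 - 16%:R * (w + w) = - (128%:R + 96%:R * a) + (a^+2 - 2%:R) * 4%:R * (-24%:R - 8%:R * a).
  by rewrite /w; ring.
rewrite a2 subrr !mul0r addr0 in e.
have := congr1 (real_complex R) e.
rewrite !(rmorphB, rmorphD, rmorphM, rmorphXn, rmorph1, rmorph_nat, rmorph0, rmorphN) => ->.
have h : (128%:R + 96%:R * a)%:C%C = 128%:R + 96%:R * a%:C%C :> C.
  by rewrite rmorphD rmorphM !rmorph_nat.
rewrite -h oppr_eq0 (inj_eq (@complexI R)) gt_eqF // ltr_wpDr ?mulr_ge0 ?sqrtr_ge0 //.
Qed.


Definition Kp : {poly C} := (16%:R)%:P * 'X^4.

Lemma Kr : Kp.[r] != 0.
Proof.
rewrite /Kp hornerM hornerC hornerXn mulf_neq0 ?expf_neq0 ?r_neq0 //.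
by rewrite pnatr_eq0.
Qed.

Lemma descent n (A B : {poly C}) : (size A <= n)%N -> Kp * B ^+ 2 = Dp * A ^+ 2 -> A = 0.
Proof.
elim: n A B => [|n IH] A B hA E; first by apply/size_poly_leq0P.
have [->|A0] := eqVneq A 0; first by [].
have nz : 'X - z != 0 by rewrite polyXsubC_eq0.
have Br : root B r.
  have := congr1 (fun p => p.[r]) E; rewrite /= (hornerM Kp) (hornerM Dp) !horner_exp Dr mul0r.
  move/eqP; rewrite mulf_eq0 (negbTE Kr) /= expf_eq0 /=.
  by [].
have [B1 EB] := factor_theorem _ _ Br.
have E1 : Kp * B1 ^+ 2 * ('X - z) = D1 * A ^+ 2.
  apply: (mulfI nz).
  have -> : ('X - z) * (D1 * A ^+ 2) = Dp * A ^+ 2 by rewrite D_factor mulrA.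
  by rewrite -E EB /z; ring.
have Ar : root A r.
  have := congr1 (fun p => p.[r]) E1; rewrite /= (hornerM _ ('X - z)) hornerXsubC subrr mulr0 (hornerM D1) horner_exp.
  move/esym/eqP; rewrite mulf_eq0 (negbTE D1r) /= expf_eq0 /=.
  by [].
have [A1 EA] := factor_theorem _ _ Ar.
have E2 : Kp * B1 ^+ 2 = Dp * A1 ^+ 2.
  apply: (mulIf nz).
  rewrite E1 EA D_factor /z; ring.
have A10 : A1 != 0 by apply: contraNneq A0 => A1_0; rewrite EA A1_0 mul0r.
have hA1 : (size A1 <= n)%N.
  move: hA; rewrite EA size_Mmonic ?monicXsubC // size_XsubC addn2 /=.
  by [].
by rewrite EA (IH A1 B1 hA1 E2) mul0r.
Qed.

Lemma KD_zero (A B : {poly C}) : Kp * B ^+ 2 = Dp * A ^+ 2 -> A = 0 /\ B = 0.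
Proof.
move=> E; have A0 := @descent _ A B (leqnn _) E.
split => //; move: E; rewrite A0 expr0n /= mulr0 => /eqP.
rewrite mulf_eq0 expf_eq0 /= => /orP [|/eqP //].
rewrite /Kp mulf_eq0 polyC_eq0 pnatr_eq0 /= expf_eq0 /=.
by rewrite polyX_eq0.
Qed.

End Alg.

Set Implicit Arguments. Unset Strict Implicit. Unset Printing Implicit Defensive.

Lemma fchoice (A : Type) (B : A -> Type) (P : forall x, B x -> Prop) :
  (forall x, exists y, P x y) -> exists f : forall x, B x, forall x, P x (f x).
Proof.
move=> H; exists (fun x => proj1_sig (constructive_indefinite_description _ (H x))).
by move=> x; case: (constructive_indefinite_description _ (H x)).
Qed.

Section Main.
Variable R : realType.
Local Notation C := (R[i]).

Definition Pu (u : R) : R := (2%:R * u / (1 + u ^+ 2)) ^+ 2.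

Definition pairP := ({poly C} * {poly C})%type.

Definition good (k : qstate R) : Prop :=
  exists S : seq pairP, forall u : R, 0 <= u <= 1 ->
    exists2 ab, ab \in S & exists c : C, k (Pu u) = (c * ab.1.[u%:C%C], c * ab.2.[u%:C%C]).

Lemma den_gt0 (u : R) : 0 < 1 + u ^+ 2.
Proof. by rewrite ltr_pwDl // sqr_ge0. Qed.

Lemma Pu_range u : 0 <= u <= 1 -> 0 <= Pu u <= 1.
Proof.
move=> /andP [u0 u1]; have d := den_gt0 u.
have h0 : 0 <= 2%:R * u / (1 + u ^+ 2) by rewrite divr_ge0 ?mulr_ge0 ?ler0n // ltW.
rewrite /Pu sqr_ge0 /= exprn_ile1 //.
rewrite ler_pdivrMr // mul1r -subr_ge0.
have -> : 1 + u ^+ 2 - 2%:R * u = (1 - u) ^+ 2 by ring.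
by rewrite sqr_ge0.
Qed.


Lemma sqrt_Pu u : 0 <= u <= 1 -> Num.sqrt (Pu u) = 2%:R * u / (1 + u ^+ 2).
Proof.
move=> /andP [u0 u1]; have d := den_gt0 u.
by rewrite /Pu sqrtr_sqr ger0_norm // divr_ge0 ?mulr_ge0 ?ler0n // ltW.
Qed.

Lemma sqrt_1Pu u : 0 <= u <= 1 -> Num.sqrt (1 - Pu u) = (1 - u ^+ 2) / (1 + u ^+ 2).
Proof.
move=> /andP [u0 u1]; have d := den_gt0 u.
have -> : 1 - Pu u = ((1 - u ^+ 2) / (1 + u ^+ 2)) ^+ 2.
  rewrite /Pu; field; by rewrite gt_eqF.
rewrite sqrtr_sqr ger0_norm // divr_ge0 ?(ltW d) // subr_ge0.
by rewrite -[X in _ <= X](expr1n _ 2) ler_sqr // nnegrE.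
Qed.

Lemma good_pstate : good (@pstate R).
Proof.
exists [:: ('X *+ 2, 1 - 'X ^+ 2)] => u hu; exists ('X *+ 2, 1 - 'X ^+ 2).
  by rewrite mem_seq1.
exists ((1 + u ^+ 2)^-1)%:C%C.
rewrite /pstate sqrt_Pu // sqrt_1Pu //=.
rewrite hornerMn hornerX hornerD hornerN horner_exp hornerX -polyC1 hornerC.
rewrite !(rmorphM, fmorphV, rmorphD, rmorphB, rmorphXn, rmorph1, rmorph_nat).
by congr (_, _); ring.
Qed.

Lemma good_cstate a : good (@cstate R a).
Proof.
exists [:: (a%:P, 1%:P)] => u hu; exists (a%:P, 1%:P); first by rewrite mem_seq1.
exists (1 / (Num.sqrt (complex.Re a ^+ 2 + complex.Im a ^+ 2 + 1))%:C%C).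
by rewrite /cstate /= !hornerC mulr1 mul1r mulrC.
Qed.


Definition pamp (ab : pairP) (b : bool) : {poly C} := if b then ab.2 else ab.1.

Definition pvec (n : nat) (ab : 'I_n -> pairP) : 'cV[{poly C}]_(2 ^ n) :=
  \col_(j < 2 ^ n) \prod_(i < n) pamp (ab i) (odd (j %/ 2 ^ i)).

Definition pidx (N : nat) (v : 'cV[{poly C}]_N) (k : nat) : {poly C} :=
  \sum_(j < N | val j == k) v j 0.

Definition Fp (n : nat) (U : 'M[C]_(2 ^ n.+1)) (m : nat) (ab : 'I_n.+1 -> pairP) : pairP :=
  let v := map_mx polyC U *m pvec ab in (pidx v (2 * m)%N, pidx v (2 * m).+1).

Lemma prod_state_eval n (inp : 'I_n -> qstate R) (ab : 'I_n -> pairP) (cf : 'I_n -> C) p x :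
  (forall i, inp i p = (cf i * (ab i).1.[x], cf i * (ab i).2.[x])) ->
  prod_state inp p = (\prod_i cf i) *: map_mx (horner_eval x) (pvec ab).
Proof.
move=> H; apply/matrixP => j k; rewrite !mxE /= horner_evalE horner_prod -big_split /=.
apply: eq_bigr => i _; rewrite H /amp /pamp.
by case: (odd _).
Qed.

Lemma branch_eval n (inp : 'I_n.+1 -> qstate R) U m (ab : 'I_n.+1 -> pairP) (cf : 'I_n.+1 -> C) p x :
  (forall i, inp i p = (cf i * (ab i).1.[x], cf i * (ab i).2.[x])) ->
  branch_out inp U m p = ((\prod_i cf i) * (Fp U m ab).1.[x], (\prod_i cf i) * (Fp U m ab).2.[x]).
Proof.
move=> H; rewrite /branch_out (prod_state_eval H) -scalemxAr.
have eU : map_mx (horner_eval x) (map_mx polyC U) = U.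
  by apply/matrixP => i j; rewrite !mxE /= horner_evalE hornerC.
rewrite -[in LHS]eU -map_mxM /Fp /at_index /pidx /=.
by congr (_, _); rewrite horner_sum mulr_sumr; apply: eq_bigr => j _; rewrite !mxE.
Qed.


Lemma branch_poly n (inp : 'I_n.+1 -> qstate R) (S : 'I_n.+1 -> seq pairP) U m :
  (forall i u, 0 <= u <= 1 -> exists2 ab, ab \in S i &
     exists c : C, inp i (Pu u) = (c * ab.1.[u%:C%C], c * ab.2.[u%:C%C])) ->
  exists T : seq pairP, forall u, 0 <= u <= 1 -> exists2 ab, ab \in T &
     exists c : C, branch_out inp U m (Pu u) = (c * ab.1.[u%:C%C], c * ab.2.[u%:C%C]).
Proof.
move=> H.
pose N := (\max_i size (S i)).+1.
exists [seq Fp U m (fun i => nth (0, 0) (S i) (g i)) | g : {ffun 'I_n.+1 -> 'I_N} <- enum {ffun 'I_n.+1 -> 'I_N}].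
move=> u hu.
have H' : forall i, exists abc : pairP * C, abc.1 \in S i /\
    inp i (Pu u) = (abc.2 * abc.1.1.[u%:C%C], abc.2 * abc.1.2.[u%:C%C]).
  by move=> i; have [ab h [c e]] := H i u hu; exists (ab, c).
have [f hf] := @fchoice _ (fun _ => (pairP * C)%type) _ H'.
pose g := [ffun i => (inord (index (f i).1 (S i)) : 'I_N)].
exists (Fp U m (fun i => (f i).1)).
  apply/mapP; exists g; first by rewrite mem_enum.
  congr Fp; apply: functional_extensionality => i; rewrite ffunE inordK ?nth_index //.
    by case: (hf i).
  rewrite ltnS (leq_trans _ (leq_bigmax i)) // ltnW // index_mem.
  by case: (hf i).
exists (\prod_i (f i).2); apply: branch_eval => i.
by case: (hf i).
Qed.


Lemma good_step (k : qstate R) (nb : nat) (ns : 'I_nb -> nat)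
    (inp : forall b : 'I_nb, 'I_(ns b).+1 -> qstate R)
    (U : forall b : 'I_nb, 'M[C]_(2 ^ (ns b).+1))
    (m : 'I_nb -> nat) :
    (forall b i, good (inp b i)) ->
    (forall p : R, 0 <= p <= 1 ->
       (forall b : 'I_nb, exists c : C,
          branch_out (inp b) (U b) (m b) p = (c * (k p).1, c * (k p).2))
       /\ (exists b : 'I_nb, branch_out (inp b) (U b) (m b) p != (0, 0))) ->
    good k.
Proof.
move=> Hin Hout.
have HT : forall b, exists T : seq pairP, forall u, 0 <= u <= 1 -> exists2 ab, ab \in T &
     exists c : C, branch_out (inp b) (U b) (m b) (Pu u) = (c * ab.1.[u%:C%C], c * ab.2.[u%:C%C]).
  move=> b.
  have [Sb hSb] := @fchoice _ (fun _ => seq pairP) _ (fun i => Hin b i).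
  exact: branch_poly hSb.
have [Tf hTf] := @fchoice _ (fun _ => seq pairP) _ HT.
exists (flatten [seq Tf b | b <- enum 'I_nb]) => u hu.
have [hall [b hb]] := Hout _ (Pu_range hu).
have [ab abT [c e]] := hTf b u hu.
have [c' e'] := hall b.
exists ab; first by apply/flatten_mapP; exists b; rewrite ?mem_enum.
have c'0 : c' != 0.
  by apply: contraNneq hb => c'0; rewrite e' c'0 !mul0r.
exists (c'^-1 * c).
move: e; rewrite e'; case=> e1 e2.
rewrite -!mulrA -e1 -e2 !mulKf //.
by case: (k _).
Qed.


Lemma input_good (q : qstate R) :
  q = @pstate R \/ (exists a, q = cstate a) \/ good q -> good q.
Proof.
case=> [->|[[a ->]|//]]; [exact: good_pstate | exact: good_cstate].
Qed.

Fixpoint sim_good (k : qstate R) (H : simulable k) {struct H} : good k :=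
  match H with
  | Simulable k nb ns inp U m _ Hin _ Hout =>
      good_step (fun b i => input_good
        (match Hin b i with
         | or_introl e => or_introl e
         | or_intror (or_introl e) => or_intror (or_introl e)
         | or_intror (or_intror s) => or_intror (or_intror (sim_good s))
         end)) Hout
  end.


Definition Gp (ab : pairP) : {poly C} := Kp R * ab.2 ^+ 2 - Dp R * ab.1 ^+ 2.

Lemma point_alg (u P Q : R) (A B : {poly C}) (c : C) :
  Q ^+ 2 = 1 - P ^+ 2 -> P * (1 + u ^+ 2) ^+ 2 = 4%:R * u ^+ 2 ->
  (P%:C%C, Q%:C%C) = (c * A.[u%:C%C], c * B.[u%:C%C]) ->
  (Gp (A, B)).[u%:C%C] = 0 /\ ~ (A = 0 /\ B = 0).
Proof.
move=> hQ hP [e1 e2].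
have nPQ : ~ (P = 0 /\ Q = 0).
  by case=> P0 Q0; move: hQ; rewrite P0 Q0 expr0n /= subr0 => /eqP; rewrite eq_sym oner_eq0.
split; last first.
  case=> A0 B0; apply: nPQ; move: e1 e2; rewrite A0 B0 horner0 mulr0 => e1 e2.
  by split; apply: (@complexI R); rewrite ?e1 ?e2 rmorph0.
have c0 : c != 0.
  apply/negP => /eqP c0; apply: nPQ; move: e1 e2; rewrite c0 !mul0r => e1 e2.
  by split; apply: (@complexI R); rewrite ?e1 ?e2 rmorph0.
apply: (mulfI (expf_neq0 2 c0)); rewrite mulr0.
rewrite /Gp /= hornerD hornerN (hornerM (Kp R)) (hornerM (Dp R)) !horner_exp Dp_eval /Kp hornerM hornerC hornerXn.
transitivity ((16%:R * u%:C%C ^+ 4) * (c * B.[u%:C%C]) ^+ 2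
   - ((1 + u%:C%C ^+ 2) ^+ 4 - 16%:R * (u%:C%C ^+ 2) ^+ 2) * (c * A.[u%:C%C]) ^+ 2).
  by ring.
rewrite -e1 -e2.
have eR : 16%:R * u ^+ 4 * Q ^+ 2 - ((1 + u ^+ 2) ^+ 4 - 16%:R * (u ^+ 2) ^+ 2) * P ^+ 2 = 0.
  rewrite hQ.
  have -> : 16%:R * u ^+ 4 * (1 - P ^+ 2) - ((1 + u ^+ 2) ^+ 4 - 16%:R * (u ^+ 2) ^+ 2) * P ^+ 2
     = 16%:R * u ^+ 4 - (P * (1 + u ^+ 2) ^+ 2) ^+ 2 by ring.
  by rewrite hP; ring.
have := congr1 (real_complex R) eR.
by rewrite !(rmorphB, rmorphD, rmorphM, rmorphXn, rmorph1, rmorph_nat, rmorph0).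
Qed.

End Main.

Theorem mainTheorem3 (R : realType) :
  ~ simulable_tuple (fun p : R => p%:C%C) (fun p : R => (Num.sqrt (1 - p ^+ 2))%:C%C).
Proof.
move=> /sim_good [S hS].
pose H := \prod_(ab <- S | Gp ab != 0) Gp ab.
have H0 : H != 0 by rewrite prodf_seq_neq0; apply/allP => ab _; apply/implyP.
have Hroot : forall u : R, 0 <= u <= 1 -> root H u%:C%C.
  move=> u hu; have [ab abS [c e]] := hS u hu.
  have hP : Pu u * (1 + u ^+ 2) ^+ 2 = 4%:R * u ^+ 2.
    rewrite /Pu; field; by rewrite gt_eqF // den_gt0.
  have hQ : Num.sqrt (1 - Pu u ^+ 2) ^+ 2 = 1 - Pu u ^+ 2.
    have /andP [p0 p1] := Pu_range hu.
    by rewrite sqr_sqrtr // subr_ge0 exprn_ile1.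
  move: ab abS e => [A B] abS e.
  have [G0 nAB] := point_alg hQ hP e.
  have GnZ : Gp (A, B) != 0.
    apply/negP => /eqP G0'; apply: nAB; apply: KD_zero; apply/eqP.
    by rewrite -subr_eq0; apply/eqP.
  rewrite /root /H horner_prod prodf_seq_eq0; apply/hasP; exists (A, B) => //.
  by rewrite GnZ /= G0.
pose M := size H.
have M0 : (0 < M)%N by rewrite /M size_poly_gt0.
pose rs := [seq ((i%:R / M%:R : R)%:C%C) | i <- iota 0 M.+1].
have := max_poly_roots H0.
move=> /(_ rs); rewrite size_map size_iota ltnNge leqnSn /=.
have Mr : (M%:R : R) != 0 by rewrite pnatr_eq0 -lt0n.
suff [ha hu] : all (root H) rs /\ uniq rs by move=> /(_ ha hu).
split.
  apply/allP => y /mapP [i hi ->]; apply: Hroot.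
  rewrite mem_iota add0n ltnS in hi.
  rewrite divr_ge0 ?ler0n //= ler_pdivrMr ?ltr0n // mul1r ler_nat.
  by case/andP: hi.
rewrite map_inj_in_uniq ?iota_uniq // => i j _ _ /(@complexI R) /(mulIf (invr_neq0 Mr)).
by move/eqP; rewrite eqr_nat => /eqP.
Qed.
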